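(* The following inclusions are homotopy equivalences of topological hyperfields: 1. $\mathbb{K}\hookrightarrow\triangle_0$; 2. $\mathbb{S}\hookrightarrow\mathcal{T}\mathbb{R}_0$; 3. $\Phi\hookrightarrow\mathcal{T}\mathbb{C}_0$; 4. $\mathbb{K}\hookrightarrow\mathcal{T}\triangle_0$. In each case a homotopy inverse is given by $\operatorname{ph}(x)=x/|x|$ for $x\ne0$, with $\operatorname{ph}(0)=0$.
   Context: Hyperfields. A hyperfield $(F,\odot,\boxplus,1,0)$ has the following data and axioms. - $\odot$ is a commutative multiplication and $\boxplus$ is a hyperaddition assigning to each $x,y$ a nonempty subset $x\boxplus y\subseteq F$ (extended to subsets by unions). - $\boxplus$ is commutative and associative, and $x\boxplus 0=\{x\}$. - Each $x$ has a unique $-x$ with $0\in x\boxplus(-x)$, and $x\in y\boxplus z \iff z\in x\boxplus(-y)$. - $(F\setminus\{0\},\odot,1)$ is an abelian group, $0\odot x=0$, and $x\odot(y\boxplus z)=(x\odot y)\boxplus(x\odot z)$. A homomorphism $h$ satisfies $h(0)=0$, $h(1)=1$, $h(xy)=h(x)h(y)$ and $h(x\boxplus y)\subseteq h(x)\boxplus h(y)$. Topological hyperfields. A topological hyperfield is a hyperfield with a topology in which $F\setminus\{0\}$ is open, multiplication is continuous, and inversion on $F^\times$ is continuous. If $T$ is the topology, the 0-coarse topology has as open sets $F$ together with all $U\in T$ with $0\notin U$. Homotopies. A hyperfield homotopy is a continuous $H:F\times[0,1]\to F'$ with each $H_t$ a hyperfield homomorphism. A homotopy equivalence of topological hyperfields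 is a continuous homomorphism $h:F\to F'$ for which there exist a continuous homomorphism $g:F'\to F$ and hyperfield homotopies $G$ on $F$ and $H$ on $F'$ with $G_0=\mathrm{id}$, $G_1=g\circ h$, $H_0=\mathrm{id}$, $H_1=h\circ g$. Hyperfields, all with multiplication that of $\mathbb{C}$. - $\mathbb{K}=\{0,1\}$ with $1\boxplus1=\{0,1\}$; open sets $\emptyset,\{1\},\{0,1\}$. - $\mathbb{S}=\{-1,0,1\}$ with $1\boxplus1=\{1\}$, $(-1)\boxplus(-1)=\{-1\}$, $1\boxplus(-1)=\{-1,0,1\}$; open sets $\emptyset,\{1\},\{-1\},\{1,-1\},\mathbb{S}$. - $\Phi=S^1\cup\{0\}$ with $a\boxplus a=\{a\}$ and $a\boxplus(-a)=S^1\cup\{0\}$; for $b\ne\pm a$ in $S^1$, $a\boxplus b$ is the shortest closed arc joining $a,b$. Its open sets are the open subsets of $S^1$ and $S^1\cup\{0\}$. - $\triangle=\mathbb{R}_{\ge0}$ with $a\boxplus b=[|a-b|,a+b]$. - $\mathcal{T}\triangle=\mathbb{R}_{\ge0}$ with $a\boxplus b=\{\max(a,b)\}$ if $a\ne b$, and $a\boxplus a=[0,a]$. - $\mathcal{T}\mathbb{R}=\mathbb{R}$ with $a\boxplus b=\{a\}$ if $|a|>|b|$ or $a=b$, and $a\boxplus(-a)=[-|a|,|a|]$. - $\mathcal{T}\mathbb{C}=\mathbb{C}$ with: $a\boxplus b=\{a\}$ if $|a|>|b|$; $a\boxplus(-a)=\{x:|x|\le|a|\}$; if $|a|=|b|$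 and $b\ne-a$, $a\boxplus b$ is the shortest closed arc from $a$ to $b$ on the circle of radius $|a|$. The subscript $0$ denotes the 0-coarse topology derived from the Euclidean topology. *)

(* Defs.v *)
From Stdlib Require Import Reals Lra.
Open Scope R_scope.

Definition C : Type := (R * R)%type.
Definition C0 : C := (0, 0).
Definition C1 : C := (1, 0).
Definition RtoC (r : R) : C := (r, 0).
Definition Cadd (z w : C) : C := (fst z + fst w, snd z + snd w).
Definition Copp (z : C) : C := (- fst z, - snd z).
Definition Csub (z w : C) : C := Cadd z (Copp w).
Definition Cmul (z w : C) : C :=
  (fst z * fst w - snd z * snd w, fst z * snd w + snd z * fst w).
Definition Cscale (r : R) (z : C) : C := (r * fst z, r * snd z).
Definition Cnorm (z : C) : R := sqrt (fst z * fst z + snd z * snd z).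

Definition ph (z : C) : C :=
  if Req_EM_T (Cnorm z) 0 then C0 else Cscale (/ Cnorm z) z.

(* ---------- Hyperfields realised inside C ----------
   All hyperfields of the paper considered here are subsets of C, with the
   multiplication of C, unit C1 and zero C0.  A (topological) hyperfield of
   this kind is given by its carrier, its hyperaddition as a ternary relation
   ([hadd x y z] means z ∈ x ⊞ y) and its family of open sets (open sets are
   subsets of the carrier). *)
Record HF := mkHF {
  car : C -> Prop;
  hadd : C -> C -> C -> Prop;
  opens : (C -> Prop) -> Prop
}.

Definition euclid_open (P U : C -> Prop) : Prop :=
  (forall z, U z -> P z) /\
  forall x, U x -> exists eps, eps > 0 /\
    forall y, P y -> Cnorm (Csub y x) < eps -> U y.

Definition zero_coarse (P : C -> Prop) (T : (C -> Prop) -> Prop)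
  (U : C -> Prop) : Prop :=
  (forall z, U z <-> P z) \/ (T U /\ ~ U C0).

Definition is_hom (F F' : HF) (h : C -> C) : Prop :=
  (forall x, car F x -> car F' (h x)) /\
  h C0 = C0 /\ h C1 = C1 /\
  (forall x y, car F x -> car F y -> h (Cmul x y) = Cmul (h x) (h y)) /\
  (forall x y z, car F x -> car F y -> hadd F x y z ->
     hadd F' (h x) (h y) (h z)).

Definition continuous_map (F F' : HF) (h : C -> C) : Prop :=
  (forall x, car F x -> car F' (h x)) /\
  forall V, opens F' V -> opens F (fun x => car F x /\ V (h x)).

Definition unit_interval (t : R) : Prop := 0 <= t <= 1.

Definition prod_open (F : HF) (W : C -> R -> Prop) : Prop :=
  (forall x t, W x t -> car F x /\ unit_interval t) /\
  forall x t, W x t -> exists U eps,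
    opens F U /\ U x /\ eps > 0 /\
    forall y s, U y -> unit_interval s -> Rabs (s - t) < eps -> W y s.

Definition continuous_homotopy (F F' : HF) (H : C -> R -> C) : Prop :=
  (forall x t, car F x -> unit_interval t -> car F' (H x t)) /\
  forall V, opens F' V ->
    prod_open F (fun x t => car F x /\ unit_interval t /\ V (H x t)).

Definition hf_homotopy (F F' : HF) (H : C -> R -> C) : Prop :=
  continuous_homotopy F F' H /\
  forall t, unit_interval t -> is_hom F F' (fun x => H x t).

Definition homotopy_equivalence_via (F F' : HF) (h g : C -> C) : Prop :=
  is_hom F F' h /\ continuous_map F F' h /\
  is_hom F' F g /\ continuous_map F' F g /\
  (exists G, hf_homotopy F F G /\
     (forall x, car F x -> G x 0 = x) /\
     (forall x, car F x -> G x 1 = g (h x))) /\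
  (exists H, hf_homotopy F' F' H /\
     (forall x, car F' x -> H x 0 = x) /\
     (forall x, car F' x -> H x 1 = h (g x))).

Definition homotopy_equivalence (F F' : HF) (h : C -> C) : Prop :=
  exists g, homotopy_equivalence_via F F' h g.

Definition is_real_nonneg (z : C) : Prop := snd z = 0 /\ 0 <= fst z.
Definition is_real (z : C) : Prop := snd z = 0.
Definition unit_circle (z : C) : Prop := Cnorm z = 1.

Definition K_car (z : C) : Prop := z = C0 \/ z = C1.
Definition K_hadd (x y z : C) : Prop :=
  (x = C0 /\ z = y) \/ (y = C0 /\ z = x) \/
  (x = C1 /\ y = C1 /\ (z = C0 \/ z = C1)).
Definition K_opens (U : C -> Prop) : Prop :=
  (forall z, ~ U z) \/ (forall z, U z <-> z = C1) \/ (forall z, U z <-> K_car z).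
Definition Kh : HF := mkHF K_car K_hadd K_opens.

Definition Cm1 : C := (-1, 0).
Definition S_car (z : C) : Prop := z = Cm1 \/ z = C0 \/ z = C1.
Definition S_hadd (x y z : C) : Prop :=
  (x = C0 /\ z = y) \/ (y = C0 /\ z = x) \/
  (x <> C0 /\ y = x /\ z = x) \/
  (x <> C0 /\ y = Copp x /\ S_car z).
Definition S_opens (U : C -> Prop) : Prop :=
  (forall z, ~ U z) \/ (forall z, U z <-> z = C1) \/
  (forall z, U z <-> z = Cm1) \/ (forall z, U z <-> (z = C1 \/ z = Cm1)) \/
  (forall z, U z <-> S_car z).
Definition Sh : HF := mkHF S_car S_hadd S_opens.

(* closed cone spanned by a and b: for |a| = |b| > 0, b <> -a, intersected with
   the circle of radius |a| it is the shortest closed arc from a to b *)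
Definition in_cone (a b z : C) : Prop :=
  exists l m, 0 <= l /\ 0 <= m /\ z = Cadd (Cscale l a) (Cscale m b).

Definition Phi_car (z : C) : Prop := unit_circle z \/ z = C0.
Definition Phi_hadd (x y z : C) : Prop :=
  (x = C0 /\ z = y) \/ (y = C0 /\ z = x) \/
  (x <> C0 /\ y = x /\ z = x) \/
  (x <> C0 /\ y = Copp x /\ Phi_car z) \/
  (x <> C0 /\ y <> C0 /\ y <> x /\ y <> Copp x /\
     unit_circle z /\ in_cone x y z).
Definition Phi_opens (U : C -> Prop) : Prop :=
  (forall z, U z <-> Phi_car z) \/ euclid_open unit_circle U.
Definition Phih : HF := mkHF Phi_car Phi_hadd Phi_opens.

Definition Tri_hadd (x y z : C) : Prop :=
  is_real_nonneg z /\ Rabs (fst x - fst y) <= fst z <= fst x + fst y.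
Definition Tri0 : HF :=
  mkHF is_real_nonneg Tri_hadd
       (zero_coarse is_real_nonneg (euclid_open is_real_nonneg)).

Definition TTri_hadd (x y z : C) : Prop :=
  is_real_nonneg z /\
  ((x <> y /\ fst z = Rmax (fst x) (fst y)) \/
   (x = y /\ 0 <= fst z <= fst x)).
Definition TTri0 : HF :=
  mkHF is_real_nonneg TTri_hadd
       (zero_coarse is_real_nonneg (euclid_open is_real_nonneg)).

Definition TR_hadd (x y z : C) : Prop :=
  is_real z /\
  ((Rabs (fst x) > Rabs (fst y) /\ z = x) \/
   (Rabs (fst y) > Rabs (fst x) /\ z = y) \/
   (x = y /\ z = x) \/
   (y = Copp x /\ - Rabs (fst x) <= fst z <= Rabs (fst x))).
Definition TR0 : HF :=
  mkHF is_real TR_hadd (zero_coarse is_real (euclid_open is_real)).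

Definition TC_car (z : C) : Prop := True.
Definition TC_hadd (x y z : C) : Prop :=
  (Cnorm x > Cnorm y /\ z = x) \/
  (Cnorm y > Cnorm x /\ z = y) \/
  (y = Copp x /\ Cnorm z <= Cnorm x) \/
  (Cnorm x = Cnorm y /\ y <> Copp x /\ Cnorm z = Cnorm x /\ in_cone x y z).
Definition TC0 : HF :=
  mkHF TC_car TC_hadd (zero_coarse TC_car (euclid_open TC_car)).

(* Main.v *)
Require Import Defs.
From Stdlib Require Import Reals Lra Classical.
Open Scope R_scope.

Definition ctn (f : R -> R -> R -> R) (a b c : R) : Prop :=
  forall e, e > 0 -> exists d, d > 0 /\ forall u v w,
    Rabs (u - a) < d -> Rabs (v - b) < d -> Rabs (w - c) < d ->
    Rabs (f u v w - f a b c) < e.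

Lemma cpt_eps f a : continuity_pt f a -> forall e, e > 0 ->
  exists d, d > 0 /\ forall y, Rabs (y - a) < d -> Rabs (f y - f a) < e.
Proof.
  intros H e He. destruct (H e He) as [d [Hd H2]]. exists d. split; auto.
  intros y Hy. destruct (Req_dec y a) as [->|n].
  - rewrite Rminus_diag, Rabs_R0; auto.
  - apply (H2 y). split; [split; [exact I| auto] | exact Hy].
Qed.

Lemma ctn_const k a b c : ctn (fun _ _ _ => k) a b c.
Proof. intros e He; exists 1; split; [lra|]; intros; rewrite Rminus_diag, Rabs_R0; auto. Qed.
Lemma ctn_p1 a b c : ctn (fun u _ _ => u) a b c.
Proof. intros e He; exists e; split; auto. Qed.
Lemma ctn_p2 a b c : ctn (fun _ v _ => v) a b c.
Proof. intros e He; exists e; split; auto. Qed.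
Lemma ctn_p3 a b c : ctn (fun _ _ w => w) a b c.
Proof. intros e He; exists e; split; auto. Qed.

Lemma ctn_plus f g a b c : ctn f a b c -> ctn g a b c ->
  ctn (fun u v w => f u v w + g u v w) a b c.
Proof.
  intros Hf Hg e He.
  destruct (Hf (e/2)) as [d1 [Hd1 H1]]; [lra|].
  destruct (Hg (e/2)) as [d2 [Hd2 H2]]; [lra|].
  exists (Rmin d1 d2). split. { apply Rmin_case; lra. }
  intros u v w Hu Hv Hw.
  assert (A1 := Rmin_l d1 d2). assert (A2 := Rmin_r d1 d2).
  specialize (H1 u v w ltac:(lra) ltac:(lra) ltac:(lra)).
  specialize (H2 u v w ltac:(lra) ltac:(lra) ltac:(lra)).
  replace (f u v w + g u v w - (f a b c + g a b c)) with
    ((f u v w - f a b c) + (g u v w - g a b c)) by ring.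
  eapply Rle_lt_trans; [apply Rabs_triang|]. lra.
Qed.

Lemma ctn_comp (g : R -> R) f a b c : continuity_pt g (f a b c) -> ctn f a b c ->
  ctn (fun u v w => g (f u v w)) a b c.
Proof.
  intros Hg Hf e He.
  destruct (cpt_eps _ _ Hg e He) as [d1 [Hd1 H1]].
  destruct (Hf d1 Hd1) as [d [Hd H]]. exists d; split; [auto|].
  intros u v w Hu Hv Hw. exact (H1 _ (H u v w Hu Hv Hw)).
Qed.

Lemma ctn_ext f g a b c : ctn f a b c -> (forall u v w, f u v w = g u v w) -> ctn g a b c.
Proof.
  intros H E e He. destruct (H e He) as [d [Hd H1]]. exists d; split; auto.
  intros. rewrite <- !E. auto.
Qed.

Lemma cpt_sq y : continuity_pt (fun x => x * x) y.
Proof.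
  exact (continuity_pt_mult id id y (derivable_continuous_pt _ _ (derivable_pt_id y))
    (derivable_continuous_pt _ _ (derivable_pt_id y))).
Qed.
Lemma cpt_scal k y : continuity_pt (fun x => k * x) y.
Proof. exact (continuity_pt_scal id k y (derivable_continuous_pt _ _ (derivable_pt_id y))). Qed.
Lemma cpt_opp y : continuity_pt (fun x => - x) y.
Proof. exact (continuity_pt_opp id y (derivable_continuous_pt _ _ (derivable_pt_id y))). Qed.

Lemma ctn_opp f a b c : ctn f a b c -> ctn (fun u v w => - f u v w) a b c.
Proof. intros H. apply (ctn_comp (fun x => - x)); auto. apply cpt_opp. Qed.

Lemma ctn_mult f g a b c : ctn f a b c -> ctn g a b c ->
  ctn (fun u v w => f u v w * g u v w) a b c.
Proof.
  intros Hf Hg.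
  apply ctn_ext with (fun u v w => / 4 * ((f u v w + g u v w) * (f u v w + g u v w) +
     - ((f u v w + - g u v w) * (f u v w + - g u v w)))).
  2: { intros; field. }
  apply (ctn_comp (fun x => /4 * x)); [apply cpt_scal|].
  apply ctn_plus.
  - apply (ctn_comp (fun x => x * x)); [apply cpt_sq|]. apply ctn_plus; auto.
  - apply ctn_opp. apply (ctn_comp (fun x => x * x)); [apply cpt_sq|].
    apply ctn_plus; auto. apply ctn_opp; auto.
Qed.

Lemma cpt_ln y : 0 < y -> continuity_pt ln y.
Proof. intros H. apply derivable_continuous_pt. exists (/ y). apply derivable_pt_lim_ln; auto. Qed.
Lemma cpt_exp y : continuity_pt exp y.
Proof. apply derivable_continuous_pt. apply derivable_pt_exp. Qed.

Definition h1 u v w := exp (- w * ln (sqrt (u * u + v * v))) * u.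
Definition h2 u v w := exp (- w * ln (sqrt (u * u + v * v))) * v.

Lemma ctn_rp a b c : 0 < a * a + b * b ->
  ctn (fun u v w => exp (- w * ln (sqrt (u * u + v * v)))) a b c.
Proof.
  intros H.
  apply (ctn_comp exp); [apply cpt_exp|].
  apply ctn_mult. { apply ctn_opp, ctn_p3. }
  apply (ctn_comp ln). { apply cpt_ln. apply sqrt_lt_R0; auto. }
  apply (ctn_comp sqrt). { apply sqrt_continuity_pt; auto. }
  apply ctn_plus; apply ctn_mult; (apply ctn_p1 || apply ctn_p2).
Qed.

Lemma ctn_h1 a b c : 0 < a * a + b * b -> ctn h1 a b c.
Proof. intros H. unfold h1. apply ctn_mult; [apply ctn_rp; auto | apply ctn_p1]. Qed.
Lemma ctn_h2 a b c : 0 < a * a + b * b -> ctn h2 a b c.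
Proof. intros H. unfold h2. apply ctn_mult; [apply ctn_rp; auto | apply ctn_p2]. Qed.

Lemma Cnorm_ge0 z : 0 <= Cnorm z.
Proof. apply sqrt_pos. Qed.

Lemma Cnorm_eq0 z : Cnorm z = 0 -> z = C0.
Proof.
  destruct z as [a b]; unfold Cnorm; simpl; intros H.
  apply sqrt_eq_0 in H; [|nra].
  assert (a = 0) by nra. assert (b = 0) by nra. subst; reflexivity.
Qed.

Lemma Cnorm_C0 : Cnorm C0 = 0.
Proof. unfold Cnorm, C0; simpl. replace (0*0+0*0) with 0 by ring. apply sqrt_0. Qed.

Lemma C_neq0_pos z : z <> C0 -> 0 < fst z * fst z + snd z * snd z.
Proof.
  destruct z as [a b]; simpl; intros H.
  destruct (Req_dec a 0); destruct (Req_dec b 0); subst; try (exfalso; apply H; reflexivity); nra.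
Qed.

Lemma Cnorm_pos z : z <> C0 -> 0 < Cnorm z.
Proof. intros H. apply sqrt_lt_R0. apply C_neq0_pos; auto. Qed.

Lemma Cnorm_neq0 z : z <> C0 -> Cnorm z <> 0.
Proof. intros H. assert (A := Cnorm_pos z H). lra. Qed.

Lemma abs_le_sqrt a b : Rabs a <= sqrt (a * a + b * b).
Proof.
  rewrite <- sqrt_Rsqr_abs. apply sqrt_le_1_alt. unfold Rsqr. nra.
Qed.

Lemma abs_fst_le z : Rabs (fst z) <= Cnorm z.
Proof. apply abs_le_sqrt. Qed.
Lemma abs_snd_le z : Rabs (snd z) <= Cnorm z.
Proof. unfold Cnorm. rewrite Rplus_comm. apply abs_le_sqrt. Qed.

Lemma sqrt_lt_e p q e : e > 0 -> Rabs p < e / 2 -> Rabs q < e / 2 -> sqrt (p * p + q * q) < e.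
Proof.
  intros He Hp Hq.
  apply Rabs_def2 in Hp. apply Rabs_def2 in Hq.
  rewrite <- (sqrt_square e) by lra.
  apply sqrt_lt_1_alt. split; nra.
Qed.

Definition Hf (z : Defs.C) (t : R) : Defs.C :=
  if Req_EM_T (Cnorm z) 0 then C0 else Cscale (Rpower (Cnorm z) (- t)) z.

Lemma Hf_C0 t : Hf C0 t = C0.
Proof. unfold Hf. destruct (Req_EM_T (Cnorm C0) 0); auto. rewrite Cnorm_C0 in n; lra. Qed.

Lemma Hf_nz z t : z <> C0 -> Hf z t = Cscale (Rpower (Cnorm z) (- t)) z.
Proof. intros H. unfold Hf. destruct (Req_EM_T (Cnorm z) 0); auto. apply Cnorm_eq0 in e. contradiction. Qed.

Lemma Hf_h z t : z <> C0 -> Hf z t = (h1 (fst z) (snd z) t, h2 (fst z) (snd z) t).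
Proof. intros H. rewrite Hf_nz by auto. reflexivity. Qed.

Lemma box_nz x : x <> C0 -> 0 < Rmax (Rabs (fst x)) (Rabs (snd x)) /\
  forall y, Rabs (fst y - fst x) < Rmax (Rabs (fst x)) (Rabs (snd x)) ->
            Rabs (snd y - snd x) < Rmax (Rabs (fst x)) (Rabs (snd x)) -> y <> C0.
Proof.
  intros H. destruct x as [a b]; simpl.
  assert (P : a <> 0 \/ b <> 0).
  { destruct (Req_dec a 0); destruct (Req_dec b 0); subst; auto. }
  split.
  - destruct P as [P|P]; apply Rabs_pos_lt in P;
      [eapply Rlt_le_trans; [apply P| apply Rmax_l] | eapply Rlt_le_trans; [apply P| apply Rmax_r]].
  - intros y H1 H2 E. subst y. simpl in H1, H2.
    rewrite Rminus_0_l, Rabs_Ropp in H1, H2.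
    revert H1 H2. apply Rmax_case; lra.
Qed.

Lemma Hf_cont x t : x <> C0 -> forall e, e > 0 -> exists d, d > 0 /\
  forall y s, Rabs (fst y - fst x) < d -> Rabs (snd y - snd x) < d -> Rabs (s - t) < d ->
  y <> C0 /\ Cnorm (Csub (Hf y s) (Hf x t)) < e.
Proof.
  intros Hx e He.
  destruct (box_nz x Hx) as [Hd0 Hb].
  set (d0 := Rmax (Rabs (fst x)) (Rabs (snd x))) in *.
  assert (P := C_neq0_pos x Hx).
  destruct (ctn_h1 (fst x) (snd x) t P (e/2)) as [d1 [Hd1 H1]]; [lra|].
  destruct (ctn_h2 (fst x) (snd x) t P (e/2)) as [d2 [Hd2 H2]]; [lra|].
  exists (Rmin d0 (Rmin d1 d2)). split. { repeat apply Rmin_case; lra. }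
  intros y s Hy1 Hy2 Hs.
  assert (A0 := Rmin_l d0 (Rmin d1 d2)). assert (A1 := Rmin_r d0 (Rmin d1 d2)).
  assert (A2 := Rmin_l d1 d2). assert (A3 := Rmin_r d1 d2).
  assert (Hy : y <> C0) by (apply Hb; lra).
  split; auto.
  rewrite (Hf_h y), (Hf_h x) by auto.
  unfold Cnorm, Csub, Cadd, Copp; simpl.
  apply sqrt_lt_e; auto.
  - apply H1; lra.
  - apply H2; lra.
Qed.

Lemma rp_pos r y : 0 < Rpower r y.
Proof. apply exp_pos. Qed.

Lemma Cnorm_scale c z : 0 <= c -> Cnorm (Cscale c z) = c * Cnorm z.
Proof.
  intros H. unfold Cnorm, Cscale; simpl.
  replace (c * fst z * (c * fst z) + c * snd z * (c * snd z)) with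
    ((c * c) * (fst z * fst z + snd z * snd z)) by ring.
  rewrite sqrt_mult_alt by nra. rewrite sqrt_square; auto.
Qed.

Definition Nt (t r : R) : R := if Req_EM_T r 0 then 0 else Rpower r (1 - t).

Lemma Nt_0 t : Nt t 0 = 0.
Proof. unfold Nt; destruct (Req_EM_T 0 0); auto; lra. Qed.
Lemma Nt_nz t r : r <> 0 -> Nt t r = Rpower r (1 - t).
Proof. unfold Nt; destruct (Req_EM_T r 0); auto; lra. Qed.

Lemma rp_split r t : 0 < r -> Rpower r (1 - t) = r * Rpower r (- t).
Proof.
  intros H. replace (1 - t) with (1 + - t) by ring. rewrite Rpower_plus, Rpower_1; auto.
Qed.

Lemma Cnorm_Hf z t : Cnorm (Hf z t) = Nt t (Cnorm z).
Proof.
  destruct (Req_dec (Cnorm z) 0) as [E|E].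
  - apply Cnorm_eq0 in E; subst. rewrite Hf_C0, Cnorm_C0, Nt_0; auto.
  - assert (Hz : z <> C0). { intros ->. apply E, Cnorm_C0. }
    rewrite Hf_nz, Nt_nz by auto. rewrite Cnorm_scale by (left; apply rp_pos).
    rewrite rp_split by (apply Cnorm_pos; auto). ring.
Qed.

Lemma Nt_lt t a b : t < 1 -> 0 <= a < b -> Nt t a < Nt t b.
Proof.
  intros Ht [Ha Hb]. rewrite (Nt_nz t b) by lra.
  destruct (Req_dec a 0) as [->|Na].
  - rewrite Nt_0. apply rp_pos.
  - rewrite Nt_nz by auto. apply Rlt_Rpower_l; lra.
Qed.

Lemma Nt_le t a b : t < 1 -> 0 <= a <= b -> Nt t a <= Nt t b.
Proof.
  intros Ht H. destruct (Req_dec a b) as [->|N]; [lra|]. left; apply Nt_lt; lra.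
Qed.

Lemma Nt_ge0 t a : 0 <= Nt t a.
Proof. unfold Nt; destruct (Req_EM_T a 0); [lra|]. left; apply rp_pos. Qed.

Lemma Nt_pos t a : a <> 0 -> 0 < Nt t a.
Proof. intros; rewrite Nt_nz by auto; apply rp_pos. Qed.

Lemma Nt_inj t a b : t < 1 -> 0 <= a -> 0 <= b -> Nt t a = Nt t b -> a = b.
Proof.
  intros Ht Ha Hb E. destruct (Rtotal_order a b) as [L|[L|L]]; auto.
  - assert (Nt t a < Nt t b) by (apply Nt_lt; lra). lra.
  - assert (Nt t b < Nt t a) by (apply Nt_lt; lra). lra.
Qed.

Lemma Nt_subadd t a b : 0 <= t -> 0 <= a -> 0 <= b -> Nt t (a + b) <= Nt t a + Nt t b.
Proof.
  intros Ht Ha Hb.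
  destruct (Req_dec a 0) as [->|Na]. { rewrite Rplus_0_l, Nt_0. lra. }
  destruct (Req_dec b 0) as [->|Nb]. { rewrite Rplus_0_r, Nt_0. lra. }
  rewrite !Nt_nz by lra. rewrite !rp_split by lra.
  assert (K : forall r, 0 < r -> r <= a + b -> Rpower (a + b) (- t) <= Rpower r (- t)).
  { intros r Hr Hrs. rewrite !Rpower_Ropp. apply Rinv_le_contravar. apply rp_pos.
    apply Rle_Rpower_l; lra. }
  assert (K1 := K a ltac:(lra) ltac:(lra)). assert (K2 := K b ltac:(lra) ltac:(lra)).
  nra.
Qed.

Lemma Cnorm_Copp z : Cnorm (Copp z) = Cnorm z.
Proof. unfold Cnorm, Copp; simpl. f_equal; ring. Qed.

Lemma Copp_C0 : Copp C0 = C0.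
Proof. unfold Copp, C0; simpl. f_equal; ring. Qed.

Lemma Hf_opp z t : Hf (Copp z) t = Copp (Hf z t).
Proof.
  destruct (Req_dec (Cnorm z) 0) as [E|E].
  - apply Cnorm_eq0 in E; subst. rewrite Copp_C0, Hf_C0, Copp_C0; auto.
  - assert (Hz : z <> C0). { intros ->. apply E, Cnorm_C0. }
    assert (Hz' : Copp z <> C0). { intros H. apply Hz. rewrite <- (Copp_C0). rewrite <- H.
      unfold Copp; simpl; destruct z; simpl; f_equal; ring. }
    rewrite !Hf_nz by auto. rewrite Cnorm_Copp. unfold Cscale, Copp; simpl; f_equal; ring.
Qed.

Lemma Hf_inj a b t : t < 1 -> Hf a t = Hf b t -> a = b.
Proof.
  intros Ht E.
  assert (N : Cnorm a = Cnorm b).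
  { apply (Nt_inj t); auto using Cnorm_ge0. rewrite <- !Cnorm_Hf, E; auto. }
  destruct (Req_dec (Cnorm a) 0) as [Z|Z].
  - assert (Z' : Cnorm b = 0) by lra. apply Cnorm_eq0 in Z, Z'. subst; auto.
  - assert (Ha : a <> C0). { intros ->. apply Z, Cnorm_C0. }
    assert (Hb : b <> C0). { intros ->. apply Z. rewrite N. apply Cnorm_C0. }
    rewrite !Hf_nz in E by auto. rewrite N in E.
    assert (P := rp_pos (Cnorm b) (- t)).
    destruct a as [a1 a2], b as [b1 b2]. unfold Cscale in E; simpl in E.
    injection E; intros E2 E1.
    apply Rmult_eq_reg_l in E1; [|lra]. apply Rmult_eq_reg_l in E2; [|lra]. subst; auto.
Qed.

Lemma Cnorm_Cmul x y : Cnorm (Cmul x y) = Cnorm x * Cnorm y.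
Proof.
  unfold Cnorm, Cmul; simpl. rewrite <- sqrt_mult_alt by nra. f_equal; ring.
Qed.

Lemma Cmul_C0_l y : Cmul C0 y = C0.
Proof. unfold Cmul, C0; simpl; f_equal; ring. Qed.
Lemma Cmul_C0_r y : Cmul y C0 = C0.
Proof. unfold Cmul, C0; simpl; f_equal; ring. Qed.

Lemma Hf_mul x y t : Hf (Cmul x y) t = Cmul (Hf x t) (Hf y t).
Proof.
  destruct (Req_dec (Cnorm x) 0) as [E|E].
  { apply Cnorm_eq0 in E; subst. rewrite Cmul_C0_l, Hf_C0, Cmul_C0_l; auto. }
  destruct (Req_dec (Cnorm y) 0) as [F|F].
  { apply Cnorm_eq0 in F; subst. rewrite Cmul_C0_r, Hf_C0, Cmul_C0_r; auto. }
  assert (Hx : x <> C0). { intros ->. apply E, Cnorm_C0. }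
  assert (Hy : y <> C0). { intros ->. apply F, Cnorm_C0. }
  assert (Hxy : Cmul x y <> C0).
  { intros H. assert (G := Cnorm_Cmul x y). rewrite H, Cnorm_C0 in G.
    assert (0 < Cnorm x) by (apply Cnorm_pos; auto). assert (0 < Cnorm y) by (apply Cnorm_pos; auto). nra. }
  rewrite !Hf_nz by auto. rewrite Cnorm_Cmul.
  rewrite <- Rpower_mult_distr by (apply Cnorm_pos; auto).
  unfold Cscale, Cmul; simpl; f_equal; ring.
Qed.

Lemma Cnorm_C1 : Cnorm Defs.C1 = 1.
Proof. unfold Cnorm, Defs.C1; simpl. replace (1*1+0*0) with 1 by ring. apply sqrt_1. Qed.

Lemma Rpower_base1 y : Rpower 1 y = 1.
Proof. unfold Rpower. rewrite ln_1, Rmult_0_r. apply exp_0. Qed.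

Lemma C1_neq0 : Defs.C1 <> C0.
Proof. unfold Defs.C1, C0; intros H; injection H; lra. Qed.

Lemma Hf_C1 t : Hf Defs.C1 t = Defs.C1.
Proof.
  rewrite Hf_nz by apply C1_neq0. rewrite Cnorm_C1, Rpower_base1.
  unfold Cscale, Defs.C1; simpl; f_equal; ring.
Qed.

Lemma Hf_0 z : Hf z 0 = z.
Proof.
  destruct (Req_dec (Cnorm z) 0) as [E|E].
  - apply Cnorm_eq0 in E; subst. apply Hf_C0.
  - assert (Hz : z <> C0). { intros ->. apply E, Cnorm_C0. }
    rewrite Hf_nz by auto. rewrite Ropp_0, Rpower_O by (apply Cnorm_pos; auto).
    destruct z; unfold Cscale; simpl; f_equal; ring.
Qed.

Lemma Hf_1 z : Hf z 1 = ph z.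
Proof.
  unfold Hf, ph. destruct (Req_EM_T (Cnorm z) 0); auto.
  rewrite Rpower_Ropp, Rpower_1; auto. pose proof (Cnorm_ge0 z); lra.
Qed.

Lemma Hf_real z t : snd z = 0 -> snd (Hf z t) = 0.
Proof.
  intros H. destruct (Req_dec (Cnorm z) 0) as [E|E].
  - apply Cnorm_eq0 in E; subst. rewrite Hf_C0; reflexivity.
  - assert (Hz : z <> C0). { intros ->. apply E, Cnorm_C0. }
    rewrite Hf_nz by auto. unfold Cscale; simpl. rewrite H; ring.
Qed.

Lemma Hf_fst_sign z t : (0 <= fst z -> 0 <= fst (Hf z t)) /\ (fst z <= 0 -> fst (Hf z t) <= 0).
Proof.
  destruct (Req_dec (Cnorm z) 0) as [E|E].
  - apply Cnorm_eq0 in E; subst. rewrite Hf_C0; simpl; lra.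
  - assert (Hz : z <> C0). { intros ->. apply E, Cnorm_C0. }
    rewrite Hf_nz by auto. unfold Cscale; simpl.
    pose proof (rp_pos (Cnorm z) (- t)). split; intros; nra.
Qed.

Lemma Cnorm_real z : snd z = 0 -> Cnorm z = Rabs (fst z).
Proof.
  intros H. unfold Cnorm. rewrite H. rewrite Rmult_0_l, Rplus_0_r. apply sqrt_Rsqr_abs.
Qed.

Lemma real_eq (z w : Defs.C) : snd z = 0 -> snd w = 0 -> fst z = fst w -> z = w.
Proof. destruct z, w; simpl; intros; subst; auto. Qed.

Lemma Hf_cont_zc P hd :
  (forall z t, P z -> unit_interval t -> P (Hf z t)) ->
  continuous_homotopy (mkHF P hd (zero_coarse P (euclid_open P)))
                      (mkHF P hd (zero_coarse P (euclid_open P))) Hf.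
Proof.
  intros HP. split; [exact HP|]. simpl. intros V HV.
  split. { intros x t [H1 [H2 _]]; auto. }
  intros x t [Px [It Vx]].
  destruct HV as [HV | [[Vsub Vop] V0]].
  - exists P, 1. split. { left; tauto. } split; auto. split; [lra|].
    intros y s Py Is _. split; [auto|split; [auto|]]. apply HV. apply HP; auto.
  - assert (Hx : x <> C0). { intros ->. rewrite Hf_C0 in Vx. auto. }
    destruct (Vop _ Vx) as [eps [Heps Heps2]].
    destruct (Hf_cont x t Hx eps Heps) as [d [Hd Hd2]].
    exists (fun y => P y /\ Rabs (fst y - fst x) < d /\ Rabs (snd y - snd x) < d), d.
    split.
    { right. split.
      - split. { intros z [Pz _]; auto. }
        intros y [Py [Hy1 Hy2]].
        exists (Rmin (d - Rabs (fst y - fst x)) (d - Rabs (snd y - snd x))).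
        split. { apply Rmin_case; lra. }
        intros z Pz Hz.
        assert (M1 := Rmin_l (d - Rabs (fst y - fst x)) (d - Rabs (snd y - snd x))).
        assert (M2 := Rmin_r (d - Rabs (fst y - fst x)) (d - Rabs (snd y - snd x))).
        assert (Z1 := abs_fst_le (Csub z y)). assert (Z2 := abs_snd_le (Csub z y)).
        assert (E1 : fst (Csub z y) = fst z + - fst y) by reflexivity.
        assert (E2 : snd (Csub z y) = snd z + - snd y) by reflexivity.
        rewrite E1 in Z1; rewrite E2 in Z2.
        split; auto. split.
        + replace (fst z - fst x) with ((fst z + - fst y) + (fst y - fst x)) by ring.
          eapply Rle_lt_trans; [apply Rabs_triang|]. lra.
        + replace (snd z - snd x) with ((snd z + - snd y) + (snd y - snd x)) by ring.
          eapply Rle_lt_trans; [apply Rabs_triang|]. lra.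
      - intros [_ [H1 H2]]. destruct (Hd2 C0 t H1 H2) as [N _].
        { rewrite Rminus_diag, Rabs_R0; auto. }
        apply N; auto. }
    split. { split; auto. rewrite !Rminus_diag, Rabs_R0. auto. }
    split; auto.
    intros y s [Py [Hy1 Hy2]] Is Hs.
    split; [auto|split; [auto|]].
    destruct (Hd2 y s Hy1 Hy2 Hs) as [_ Hc].
    apply Heps2; auto.
Qed.

Lemma const_cont_hom F : (forall V, opens F V -> forall z, V z -> car F z) ->
  continuous_homotopy F F (fun x _ => x).
Proof.
  intros HF. split; auto. intros V HV. split. { intros x t [A [B _]]; auto. }
  intros x t [A [B Vx]]. exists V, 1. split; [auto|split; [auto|split; [lra|]]].
  intros y s Vy Is _. split; [apply (HF V HV); auto|split; auto].
Qed.

Lemma is_hom_id F : is_hom F F (fun x => x).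
Proof. repeat split; auto. Qed.

Lemma is_hom_comp F F' F'' f g : is_hom F F' f -> is_hom F' F'' g -> is_hom F F'' (fun x => g (f x)).
Proof.
  intros [f1 [f2 [f3 [f4 f5]]]] [g1 [g2 [g3 [g4 g5]]]].
  repeat split; auto.
  - rewrite f2; auto.
  - rewrite f3; auto.
  - intros x y Hx Hy. rewrite f4 by auto. apply g4; auto.
Qed.

Lemma is_hom_ext F F' f g : (forall x, f x = g x) -> is_hom F F' f -> is_hom F F' g.
Proof.
  intros E [f1 [f2 [f3 [f4 f5]]]]. repeat split.
  - intros; rewrite <- E; auto.
  - rewrite <- E; auto.
  - rewrite <- E; auto.
  - intros; rewrite <- !E; auto.
  - intros; rewrite <- !E; auto.
Qed.

Lemma assemble F F' :
  is_hom F F' (fun x => x) -> continuous_map F F' (fun x => x) ->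
  is_hom F' F ph -> continuous_map F' F ph ->
  (forall V, opens F V -> forall z, V z -> car F z) ->
  (forall z, car F z -> ph z = z) ->
  continuous_homotopy F' F' Hf ->
  (forall t, 0 <= t < 1 -> is_hom F' F' (fun x => Hf x t)) ->
  homotopy_equivalence_via F F' (fun x => x) ph.
Proof.
  intros h1 c1 h2 c2 Fo Fix Hc Hh.
  split; [exact h1|]. split; [exact c1|]. split; [exact h2|]. split; [exact c2|].
  split.
  - exists (fun x _ => x). split.
    + split; [apply const_cont_hom; auto|]. intros; apply is_hom_id.
    + split; auto. intros; symmetry; auto.
  - exists Hf. split.
    + split; auto. intros t [T0 T1]. destruct (Req_dec t 1) as [->|N].
      * apply (is_hom_ext _ _ ph); [intros; symmetry; apply Hf_1|].
        exact (is_hom_comp _ _ _ _ _ h2 h1).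
      * apply Hh; lra.
    + split; intros; [apply Hf_0 | apply Hf_1].
Qed.

Lemma C0_neq_C1 : C0 <> Defs.C1.
Proof. unfold C0, Defs.C1; intros H; injection H; lra. Qed.

Lemma real_nz x : is_real x -> x <> C0 -> fst x <> 0.
Proof. destruct x as [a b]; unfold is_real; simpl; intros -> N E; subst; apply N; reflexivity. Qed.

Lemma ph_real x : is_real x ->
  (x = C0 /\ ph x = C0) \/ (0 < fst x /\ ph x = Defs.C1) \/ (fst x < 0 /\ ph x = Cm1).
Proof.
  intros Hx. destruct (classic (x = C0)) as [->|N].
  - left; split; auto. rewrite <- Hf_1. apply Hf_C0.
  - right. assert (F := real_nz x Hx N).
    rewrite <- Hf_1, Hf_nz by auto. rewrite Cnorm_real by auto.
    rewrite Rpower_Ropp, Rpower_1 by (apply Rabs_pos_lt; auto).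
    unfold is_real in Hx. destruct x as [a b]; simpl in *; subst b.
    destruct (Rtotal_order a 0) as [L|[L|L]]; [|lra|].
    + right; split; auto. rewrite Rabs_left by auto. unfold Cscale, Cm1; simpl; f_equal; field; lra.
    + left; split; auto. rewrite Rabs_right by lra. unfold Cscale, Defs.C1; simpl; f_equal; field; lra.
Qed.

Lemma ph_nonneg x : is_real_nonneg x ->
  (x = C0 /\ ph x = C0) \/ (0 < fst x /\ ph x = Defs.C1).
Proof.
  intros [H1 H2]. destruct (ph_real x H1) as [A|[A|A]]; auto. lra.
Qed.

Lemma nonneg_Hf z t : is_real_nonneg z -> is_real_nonneg (Hf z t).
Proof.
  intros [H1 H2]. split. apply Hf_real; auto. apply Hf_fst_sign; auto.
Qed.

Lemma nonneg_norm z : is_real_nonneg z -> Cnorm z = fst z.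
Proof. intros [H1 H2]. rewrite Cnorm_real by auto. apply Rabs_pos_eq; auto. Qed.

Lemma fst_Hf_nonneg z t : is_real_nonneg z -> fst (Hf z t) = Nt t (fst z).
Proof.
  intros H. rewrite <- (nonneg_norm (Hf z t)) by (apply nonneg_Hf; auto).
  rewrite Cnorm_Hf, nonneg_norm; auto.
Qed.

Lemma nonneg_eq x y : is_real_nonneg x -> is_real_nonneg y -> fst x = fst y -> x = y.
Proof. intros [] []; apply real_eq; auto. Qed.

Lemma Tri_hom t : 0 <= t < 1 -> is_hom Tri0 Tri0 (fun x => Hf x t).
Proof.
  intros Ht. split; [|split; [|split; [|split]]]; simpl.
  - intros; apply nonneg_Hf; auto.
  - apply Hf_C0.
  - apply Hf_C1.
  - intros; apply Hf_mul.
  - intros x y z Hx Hy [Hz [L U]]. split; [apply nonneg_Hf; auto|].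
    rewrite !fst_Hf_nonneg by auto.
    destruct Hx as [_ Ha], Hy as [_ Hb], Hz as [_ Hc].
    set (a := fst x) in *. set (b := fst y) in *. set (c := fst z) in *.
    assert (E1 : a - b <= c) by (eapply Rle_trans; [apply Rle_abs|exact L]).
    assert (E2 : b - a <= c) by (rewrite Rabs_minus_sym in L; eapply Rle_trans; [apply Rle_abs|exact L]).
    assert (S1 := Nt_subadd t b c ltac:(lra) Hb Hc).
    assert (S2 := Nt_subadd t a c ltac:(lra) Ha Hc).
    assert (S3 := Nt_subadd t a b ltac:(lra) Ha Hb).
    assert (M1 := Nt_le t a (b + c) ltac:(lra) ltac:(lra)).
    assert (M2 := Nt_le t b (a + c) ltac:(lra) ltac:(lra)).
    assert (M3 := Nt_le t c (a + b) ltac:(lra) ltac:(lra)).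
    split; [apply Rabs_le|]; lra.
Qed.

Lemma TTri_hom t : 0 <= t < 1 -> is_hom TTri0 TTri0 (fun x => Hf x t).
Proof.
  intros Ht. split; [|split; [|split; [|split]]]; simpl.
  - intros; apply nonneg_Hf; auto.
  - apply Hf_C0.
  - apply Hf_C1.
  - intros; apply Hf_mul.
  - intros x y z Hx Hy [Hz HH]. split; [apply nonneg_Hf; auto|].
    rewrite !fst_Hf_nonneg by auto.
    destruct HH as [[N E]|[E [L U]]].
    + left. split. { intros H. apply N. apply (Hf_inj _ _ t); auto; lra. }
      rewrite E. destruct Hx as [_ Ha], Hy as [_ Hb].
      destruct (Rle_dec (fst x) (fst y)).
      * rewrite !Rmax_right; auto. apply Nt_le; lra.
      * rewrite !Rmax_left; auto; try lra. apply Nt_le; lra.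
    + right. subst y. split; auto. split; [apply Nt_ge0|]. apply Nt_le; lra.
Qed.

Lemma ph_K_hadd x y z : is_real_nonneg x -> is_real_nonneg y -> is_real_nonneg z ->
  (x = C0 -> z = y) -> (y = C0 -> z = x) -> K_hadd (ph x) (ph y) (ph z).
Proof.
  intros Hx Hy Hz Ex Ey.
  destruct (ph_nonneg x Hx) as [[X PX]|[X PX]].
  { left. split; auto. rewrite Ex; auto. }
  destruct (ph_nonneg y Hy) as [[Y PY]|[Y PY]].
  { right; left. split; auto. rewrite Ey; auto. }
  right; right. split; auto. split; auto.
  destruct (ph_nonneg z Hz) as [[Z PZ]|[Z PZ]]; auto.
Qed.

Lemma Tri_ph_hom : is_hom Tri0 Kh ph.
Proof.
  split; [|split; [|split; [|split]]]; simpl.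
  - intros x Hx. destruct (ph_nonneg x Hx) as [[_ ->]|[_ ->]]; [left|right]; auto.
  - rewrite <- Hf_1; apply Hf_C0.
  - rewrite <- Hf_1; apply Hf_C1.
  - intros; rewrite <- !Hf_1; apply Hf_mul.
  - intros x y z Hx Hy [Hz [L U]]. apply ph_K_hadd; auto.
    + intros ->. apply nonneg_eq; auto. simpl in *. destruct Hy as [_ Hb].
      rewrite Rminus_0_l, Rabs_Ropp, Rabs_pos_eq in L by auto. lra.
    + intros ->. apply nonneg_eq; auto. simpl in *. destruct Hx as [_ Ha].
      rewrite Rminus_0_r, Rabs_pos_eq in L by auto. lra.
Qed.

Lemma TTri_ph_hom : is_hom TTri0 Kh ph.
Proof.
  split; [|split; [|split; [|split]]]; simpl.
  - intros x Hx. destruct (ph_nonneg x Hx) as [[_ ->]|[_ ->]]; [left|right]; auto.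
  - rewrite <- Hf_1; apply Hf_C0.
  - rewrite <- Hf_1; apply Hf_C1.
  - intros; rewrite <- !Hf_1; apply Hf_mul.
  - intros x y z Hx Hy [Hz HH]. apply ph_K_hadd; auto.
    + intros ->. apply nonneg_eq; auto. simpl in *. destruct Hy as [_ Hb].
      destruct HH as [[_ E]|[<- [L U]]]; simpl in *.
      * rewrite E. apply Rmax_right; auto.
      * lra.
    + intros ->. apply nonneg_eq; auto. simpl in *. destruct Hx as [_ Ha].
      destruct HH as [[_ E]|[-> [L U]]]; simpl in *.
      * rewrite E. apply Rmax_left; auto.
      * lra.
Qed.

Lemma K_nonneg z : K_car z -> is_real_nonneg z.
Proof. intros [->| ->]; split; simpl; lra. Qed.

Lemma K_id_Tri : is_hom Kh Tri0 (fun x => x).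
Proof.
  split; [|split; [|split; [|split]]]; simpl; auto.
  - apply K_nonneg.
  - intros x y z Hx Hy H. unfold K_car in *.
    destruct H as [[-> ->]|[[-> ->]|[-> [-> [-> | ->]]]]];
    try (destruct Hx as [-> | ->]); try (destruct Hy as [-> | ->]);
    unfold Tri_hadd, is_real_nonneg, C0, Defs.C1; simpl;
    rewrite ?Rminus_diag, ?Rminus_0_l, ?Rminus_0_r, ?Rabs_R0, ?Rabs_Ropp, ?Rabs_R1; lra.
Qed.

Lemma K_id_TTri : is_hom Kh TTri0 (fun x => x).
Proof.
  split; [|split; [|split; [|split]]]; simpl; auto.
  - apply K_nonneg.
  - intros x y z Hx Hy H. unfold K_car in *.
    destruct H as [[-> ->]|[[-> ->]|[-> [-> [-> | ->]]]]];
    try (destruct Hx as [-> | ->]); try (destruct Hy as [-> | ->]);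
    unfold TTri_hadd, is_real_nonneg;
    (split; [simpl; lra|]);
    first [ right; split; [reflexivity| simpl; lra]
          | left; split; [intros E; injection E; lra | simpl; unfold Rmax; destruct Rle_dec; lra]].
Qed.

Lemma K_opens_sub V : K_opens V -> forall z, V z -> K_car z.
Proof.
  intros [H|[H|H]] z Vz.
  - exfalso; apply (H z); auto.
  - right; apply H; auto.
  - apply H; auto.
Qed.

Lemma ph_C0 : ph C0 = C0.
Proof. rewrite <- Hf_1; apply Hf_C0. Qed.
Lemma ph_C1 : ph Defs.C1 = Defs.C1.
Proof. rewrite <- Hf_1; apply Hf_C1. Qed.

Lemma K_fix z : K_car z -> ph z = z.
Proof. intros [-> | ->]; [apply ph_C0|apply ph_C1]. Qed.

Lemma K_cont_id hd : continuous_map Kh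
  (mkHF is_real_nonneg hd (zero_coarse is_real_nonneg (euclid_open is_real_nonneg))) (fun x => x).
Proof.
  split; simpl. { apply K_nonneg. }
  intros V [HV|[HV V0]].
  - right; right. intros z; split; [tauto|]. intros Kz; split; auto. apply HV, K_nonneg; auto.
  - destruct (classic (V Defs.C1)) as [V1|V1].
    + right; left. intros z; split.
      * intros [[-> | ->] Vz]; auto. contradiction.
      * intros ->. split; auto. right; auto.
    + left. intros z [[-> | ->] Vz]; auto.
Qed.

Lemma K_cont_ph hd : continuous_map
  (mkHF is_real_nonneg hd (zero_coarse is_real_nonneg (euclid_open is_real_nonneg))) Kh ph.
Proof.
  split; simpl.
  { intros x Hx. destruct (ph_nonneg x Hx) as [[_ ->]|[_ ->]]; [left|right]; auto. }
  intros V [HV|[HV|HV]].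
  - right. split.
    + split. { intros z [Pz _]; auto. }
      intros x [_ Vx]. exfalso; apply (HV _ Vx).
    + intros [_ Vx]. apply (HV _ Vx).
  - right. split.
    + split. { intros z [Pz _]; auto. }
      intros x [Px Vx]. apply HV in Vx.
      destruct (ph_nonneg x Px) as [[_ E]|[Fx E]].
      { rewrite E in Vx. exfalso; apply C0_neq_C1; auto. }
      exists (fst x). split; auto. intros y Py Hy. split; auto. apply HV.
      destruct (ph_nonneg y Py) as [[-> _]|[_ E2]]; auto.
      exfalso. assert (Z := abs_fst_le (Csub C0 x)).
      assert (E1 : fst (Csub C0 x) = - fst x) by (simpl; ring). rewrite E1 in Z.
      rewrite Rabs_Ropp, Rabs_pos_eq in Z; lra.
    + intros [_ Vx]. apply HV in Vx. rewrite ph_C0 in Vx. apply C0_neq_C1; auto.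
  - left. intros z; split; [tauto|]. intros Pz. split; auto. apply HV.
    destruct (ph_nonneg z Pz) as [[_ ->]|[_ ->]]; [left|right]; auto.
Qed.

Theorem part1 : homotopy_equivalence_via Kh Tri0 (fun x => x) ph.
Proof.
  apply assemble.
  - apply K_id_Tri.
  - apply K_cont_id.
  - apply Tri_ph_hom.
  - apply K_cont_ph.
  - apply K_opens_sub.
  - apply K_fix.
  - apply Hf_cont_zc. intros; apply nonneg_Hf; auto.
  - apply Tri_hom.
Qed.

Theorem part4 : homotopy_equivalence_via Kh TTri0 (fun x => x) ph.
Proof.
  apply assemble.
  - apply K_id_TTri.
  - apply K_cont_id.
  - apply TTri_ph_hom.
  - apply K_cont_ph.
  - apply K_opens_sub.
  - apply K_fix.
  - apply Hf_cont_zc. intros; apply nonneg_Hf; auto.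
  - apply TTri_hom.
Qed.

Definition Sr (a : R) : Prop := a = -1 \/ a = 0 \/ a = 1.
Definition Shr (a b c : R) : Prop :=
  (a = 0 /\ c = b) \/ (b = 0 /\ c = a) \/ (a <> 0 /\ b = a /\ c = a) \/
  (a <> 0 /\ b = - a /\ Sr c).
Definition TRr (a b c : R) : Prop :=
  (Rabs a > Rabs b /\ c = a) \/ (Rabs b > Rabs a /\ c = b) \/ (a = b /\ c = a) \/
  (b = - a /\ - Rabs a <= c <= Rabs a).

Lemma S_car_iff z : S_car z <-> is_real z /\ Sr (fst z).
Proof.
  split.
  - intros [-> |[-> | ->]]; unfold is_real, Sr; simpl; split; auto.
  - destruct z as [a b]; unfold is_real, Sr; simpl. intros [-> [-> |[-> | ->]]]; unfold S_car;
      [left|right;left|right;right]; reflexivity.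
Qed.

Lemma S_real z : S_car z -> is_real z.
Proof. intros H; apply S_car_iff; auto. Qed.

Lemma Copp_real_iff x y : is_real x -> is_real y -> (y = Copp x <-> fst y = - fst x).
Proof.
  intros Hx Hy. split.
  - intros ->; reflexivity.
  - intros E. apply real_eq; auto. unfold is_real in *; simpl; rewrite Hx; ring.
Qed.

Lemma eq_real_iff (x y : Defs.C) : is_real x -> is_real y -> (x = y <-> fst x = fst y).
Proof. intros Hx Hy; split; [intros ->; auto| apply real_eq; auto]. Qed.

Lemma C0_real_iff x : is_real x -> (x = C0 <-> fst x = 0).
Proof. intros Hx. apply eq_real_iff; auto. reflexivity. Qed.

Lemma S_hadd_to x y z : S_car x -> S_car y -> S_hadd x y z ->
  is_real z /\ Shr (fst x) (fst y) (fst z).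
Proof.
  intros Hx Hy H. apply S_real in Hx as Rx. apply S_real in Hy as Ry.
  destruct H as [[E1 E2]|[[E1 E2]|[[N [E1 E2]]|[N [E1 E2]]]]]; subst.
  - split; auto. left. split; auto; try (apply C0_real_iff; auto).
  - split; auto. right; left. split; auto; try (apply C0_real_iff; auto).
  - split; auto. right; right; left. split; auto. intros E; apply N, C0_real_iff; auto.
  - apply S_car_iff in E2 as [E2 E3]. split; auto. right; right; right.
    split; [intros E; apply N, C0_real_iff; auto|]. split; auto.
Qed.

Lemma S_hadd_of x y z : S_car x -> S_car y -> is_real z -> Shr (fst x) (fst y) (fst z) ->
  S_hadd x y z.
Proof.
  intros Hx Hy Rz H. apply S_real in Hx as Rx. apply S_real in Hy as Ry.
  destruct H as [[E1 E2]|[[E1 E2]|[[N [E1 E2]]|[N [E1 E2]]]]].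
  - left. split; [apply C0_real_iff|apply eq_real_iff]; auto.
  - right; left. split; [apply C0_real_iff|apply eq_real_iff]; auto.
  - right; right; left. split; [intros E; apply N, C0_real_iff; auto|].
    split; apply eq_real_iff; auto.
  - right; right; right. split; [intros E; apply N, C0_real_iff; auto|].
    split; [apply Copp_real_iff; auto|]. apply S_car_iff; auto.
Qed.

Lemma TR_to x y z : is_real x -> is_real y -> TR_hadd x y z ->
  is_real z /\ TRr (fst x) (fst y) (fst z).
Proof.
  intros Rx Ry [Rz H]. split; auto.
  destruct H as [[A E]|[[A E]|[[A E]|[A E]]]]; subst.
  - left; auto.
  - right; left; auto.
  - right; right; left; auto.
  - right; right; right. split; auto.
Qed.

Lemma TR_of x y z : is_real x -> is_real y -> is_real z -> TRr (fst x) (fst y) (fst z) ->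
  TR_hadd x y z.
Proof.
  intros Rx Ry Rz H. split; auto.
  destruct H as [[A E]|[[A E]|[[A E]|[A E]]]].
  - left; split; auto; apply eq_real_iff; auto.
  - right; left; split; auto; apply eq_real_iff; auto.
  - right; right; left; split; apply eq_real_iff; auto.
  - right; right; right. split; auto. apply Copp_real_iff; auto.
Qed.

Lemma Rabs_m1 : Rabs (-1) = 1.
Proof. rewrite Rabs_left; lra. Qed.

Lemma S_TR_real a b c : Sr a -> Sr b -> Shr a b c -> TRr a b c.
Proof.
  intros Ha Hb H. unfold Shr, TRr in *; unfold Sr in *.
  destruct H as [[E1 E2]|[[E1 E2]|[[N [E1 E2]]|[N [E1 E2]]]]]; subst;
  repeat match goal with H : _ \/ _ |- _ => destruct H end; subst;
  rewrite ?Rabs_Ropp, ?Rabs_R1, ?Rabs_R0, ?Rabs_m1, ?Ropp_involutive;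
  first [ (left; split; lra) | (right; left; split; lra) | (right; right; left; split; lra)
        | (right; right; right; split; lra) | lra ].
Qed.

Definition SG (r s : R) : Prop :=
  (r = 0 /\ s = 0) \/ (r > 0 /\ Rabs r = r /\ s = 1) \/ (r < 0 /\ Rabs r = - r /\ s = -1).

Lemma TR_S_real a b c sa sb sc : TRr a b c -> SG a sa -> SG b sb -> SG c sc -> Shr sa sb sc.
Proof.
  unfold TRr, SG, Shr, Sr. intros H Ha Hb Hc.
  destruct Ha as [[A1 A2]|[[A1 [A2 A3]]|[A1 [A2 A3]]]];
  destruct Hb as [[B1 B2]|[[B1 [B2 B3]]|[B1 [B2 B3]]]];
  destruct Hc as [[C1' C2]|[[C1' [C2 C3]]|[C1' [C2 C3]]]]; subst sa sb sc;
  try subst a; try subst b; try subst c;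
  rewrite ?Rabs_R0 in *;
  destruct H as [[D1 D2]|[[D1 D2]|[[D1 D2]|[D1 [D2 D3]]]]];
  try (exfalso; lra);
  first [ (left; split; lra) | (right; left; split; lra) | (right; right; left; repeat split; lra)
        | (right; right; right; split; [lra|split; [lra| first [left; lra|right; left; lra|right; right; lra]]]) ].
Qed.

Lemma SG_ph x : is_real x -> SG (fst x) (fst (ph x)).
Proof.
  intros Rx. unfold SG. destruct (ph_real x Rx) as [[E1 E2]|[[E1 E2]|[E1 E2]]]; rewrite E2.
  - left. subst; simpl; auto.
  - right; left. split; auto. split; [apply Rabs_pos_eq; lra|reflexivity].
  - right; right. split; auto. split; [apply Rabs_left; lra|reflexivity].
Qed.

Lemma ph_S x : is_real x -> S_car (ph x).
Proof.
  intros Rx. destruct (ph_real x Rx) as [[E1 E2]|[[E1 E2]|[E1 E2]]]; rewrite E2; unfold S_car; auto.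
Qed.

Lemma S_id_TR : is_hom Sh TR0 (fun x => x).
Proof.
  split; [|split; [|split; [|split]]]; simpl; auto.
  - apply S_real.
  - intros x y z Hx Hy H. destruct (S_hadd_to x y z Hx Hy H) as [Rz Hr].
    apply TR_of; auto using S_real. apply S_TR_real; auto.
    + apply S_car_iff; auto. + apply S_car_iff; auto.
Qed.

Lemma TR_ph_S : is_hom TR0 Sh ph.
Proof.
  split; [|split; [|split; [|split]]]; simpl.
  - apply ph_S.
  - apply ph_C0.
  - apply ph_C1.
  - intros; rewrite <- !Hf_1; apply Hf_mul.
  - intros x y z Rx Ry H. destruct (TR_to x y z Rx Ry H) as [Rz Hr].
    apply S_hadd_of; auto using ph_S.
    + apply S_real, ph_S; auto.
    + eapply TR_S_real; eauto using SG_ph.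
Qed.

Lemma abs_fst_Hf z t : is_real z -> Rabs (fst (Hf z t)) = Nt t (Rabs (fst z)).
Proof.
  intros R. rewrite <- !Cnorm_real; auto. apply Cnorm_Hf. apply Hf_real; auto.
Qed.

Lemma TR_hom t : 0 <= t < 1 -> is_hom TR0 TR0 (fun x => Hf x t).
Proof.
  intros Ht. split; [|split; [|split; [|split]]]; simpl.
  - intros; apply Hf_real; auto.
  - apply Hf_C0.
  - apply Hf_C1.
  - intros; apply Hf_mul.
  - intros x y z Rx Ry [Rz H]. split; [apply Hf_real; auto|].
    destruct H as [[A E]|[[A E]|[[A E]|[A E]]]].
    + left. split; [|subst; auto].
      rewrite !abs_fst_Hf by auto. apply Nt_lt; [lra|]. split; [apply Rabs_pos|lra].
    + right; left. split; [|subst; auto].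
      rewrite !abs_fst_Hf by auto. apply Nt_lt; [lra|]. split; [apply Rabs_pos|lra].
    + right; right; left. subst; auto.
    + right; right; right. subst y. split; [apply Hf_opp|].
      assert (L : Rabs (fst z) <= Rabs (fst x)) by (apply Rabs_le; lra).
      assert (L2 : Rabs (fst (Hf z t)) <= Rabs (fst (Hf x t))).
      { rewrite !abs_fst_Hf by auto. apply Nt_le; [lra|]. split; auto. apply Rabs_pos. }
      assert (L3 := Rle_abs (fst (Hf z t))).
      assert (L4 := Rle_abs (- fst (Hf z t))). rewrite Rabs_Ropp in L4. lra.
Qed.

Lemma S_opens_sub V : S_opens V -> forall z, V z -> S_car z.
Proof.
  intros [H|[H|[H|[H|H]]]] z Vz.
  - exfalso; apply (H z); auto.
  - apply H in Vz; subst; right; right; auto.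
  - apply H in Vz; subst; left; auto.
  - apply H in Vz; destruct Vz; subst; [right; right|left]; auto.
  - apply H; auto.
Qed.

Lemma ph_Cm1 : ph Cm1 = Cm1.
Proof.
  assert (R : is_real Cm1) by reflexivity.
  destruct (ph_real Cm1 R) as [[E _]|[[E _]|[_ E]]]; auto.
  - unfold Cm1, C0 in E; injection E; lra.
  - simpl in E; lra.
Qed.

Lemma S_fix z : S_car z -> ph z = z.
Proof. intros [-> |[-> | ->]]; [apply ph_Cm1|apply ph_C0|apply ph_C1]. Qed.

Lemma C0_neq_Cm1 : C0 <> Cm1.
Proof. unfold C0, Cm1; intros H; injection H; lra. Qed.

Lemma S_cont_id : continuous_map Sh TR0 (fun x => x).
Proof.
  split; simpl. { apply S_real. }
  intros V [HV|[HV V0]].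
  - right; right; right; right. intros z; split; [tauto|].
    intros Sz; split; auto. apply HV, S_real; auto.
  - destruct (classic (V Defs.C1)) as [V1|V1]; destruct (classic (V Cm1)) as [V2|V2].
    + right; right; right; left. intros z; split.
      * intros [[-> |[-> | ->]] Vz]; auto. contradiction.
      * intros [-> | ->]; split; auto; unfold S_car; auto.
    + right; left. intros z; split.
      * intros [[-> |[-> | ->]] Vz]; auto; contradiction.
      * intros ->; split; auto; unfold S_car; auto.
    + right; right; left. intros z; split.
      * intros [[-> |[-> | ->]] Vz]; auto; contradiction.
      * intros ->; split; auto; unfold S_car; auto.
    + left. intros z [[-> |[-> | ->]] Vz]; auto.
Qed.

Lemma ph_locconst x : is_real x -> x <> C0 -> exists eps, eps > 0 /\
  forall y, is_real y -> Cnorm (Csub y x) < eps -> ph y = ph x.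
Proof.
  intros Rx Nx. assert (F := real_nz x Rx Nx).
  exists (Rabs (fst x)). split. { apply Rabs_pos_lt; auto. }
  intros y Ry Hy.
  assert (Z := abs_fst_le (Csub y x)).
  assert (E1 : fst (Csub y x) = fst y - fst x) by (simpl; ring). rewrite E1 in Z.
  assert (W : Rabs (fst y - fst x) < Rabs (fst x)) by lra.
  clear Z Hy E1.
  destruct (ph_real x Rx) as [[E2 _]|[[E2 P]|[E2 P]]]; [contradiction| |].
  - rewrite (Rabs_pos_eq (fst x)) in W by lra. apply Rabs_def2 in W.
    destruct (ph_real y Ry) as [[E3 Q]|[[E3 Q]|[E3 Q]]]; rewrite ?P, ?Q; auto; exfalso.
    + subst y; simpl in W; lra.
    + lra.
  - rewrite (Rabs_left (fst x)) in W by lra. apply Rabs_def2 in W.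
    destruct (ph_real y Ry) as [[E3 Q]|[[E3 Q]|[E3 Q]]]; rewrite ?P, ?Q; auto; exfalso.
    + subst y; simpl in W; lra.
    + lra.
Qed.

Lemma S_cont_ph : continuous_map TR0 Sh ph.
Proof.
  split; simpl. { apply ph_S. }
  intros V HV.
  destruct (classic (forall z, V z <-> S_car z)) as [A|A].
  { left. intros z; split; [tauto|]. intros Rz; split; auto. apply A, ph_S; auto. }
  assert (V0 : ~ V C0).
  { intros V0. destruct HV as [H|[H|[H|[H|H]]]]; auto.
    - apply (H C0); auto.
    - apply H in V0. apply C0_neq_C1; auto.
    - apply H in V0. apply C0_neq_Cm1; auto.
    - apply H in V0. destruct V0; [apply C0_neq_C1|apply C0_neq_Cm1]; auto. }
  right. split.
  - split. { intros z [Rz _]; auto. }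
    intros x [Rx Vx].
    assert (Nx : x <> C0). { intros ->. rewrite ph_C0 in Vx. auto. }
    destruct (ph_locconst x Rx Nx) as [eps [He Hc]].
    exists eps; split; auto. intros y Ry Hy. split; auto. rewrite Hc; auto.
  - intros [_ Vx]. rewrite ph_C0 in Vx; auto.
Qed.

Theorem part2 : homotopy_equivalence_via Sh TR0 (fun x => x) ph.
Proof.
  apply assemble.
  - apply S_id_TR.
  - apply S_cont_id.
  - apply TR_ph_S.
  - apply S_cont_ph.
  - apply S_opens_sub.
  - apply S_fix.
  - apply Hf_cont_zc. intros; apply Hf_real; auto.
  - apply TR_hom.
Qed.

Lemma ph_nz z : z <> C0 -> ph z = Cscale (/ Cnorm z) z.
Proof. intros N. unfold ph. destruct (Req_EM_T (Cnorm z) 0); auto. apply Cnorm_eq0 in e; contradiction. Qed.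

Lemma Cnorm_ph z : z <> C0 -> Cnorm (ph z) = 1.
Proof.
  intros N. rewrite ph_nz by auto. assert (P := Cnorm_pos z N).
  rewrite Cnorm_scale by (left; apply Rinv_0_lt_compat; auto). field. lra.
Qed.

Lemma unit_nz z : unit_circle z -> z <> C0.
Proof. unfold unit_circle. intros H ->. rewrite Cnorm_C0 in H. lra. Qed.

Lemma nz_Copp x : x <> C0 -> x <> Copp x.
Proof.
  destruct x as [a b]; unfold Copp; simpl; intros N E. injection E; intros. apply N.
  unfold C0; f_equal; lra.
Qed.

Lemma cone_refl_l a b : in_cone a b a.
Proof. exists 1, 0. split; [lra|split; [lra|]]. destruct a, b; unfold Cadd, Cscale; simpl; f_equal; ring. Qed.
Lemma cone_refl_r a b : in_cone a b b.
Proof. exists 0, 1. split; [lra|split; [lra|]]. destruct a, b; unfold Cadd, Cscale; simpl; f_equal; ring. Qed.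

Lemma Copp_Copp x : Copp (Copp x) = x.
Proof. destruct x; unfold Copp; simpl; f_equal; ring. Qed.

Lemma Phi_unit z : Phi_car z -> z <> C0 -> unit_circle z.
Proof. intros [H|H] N; auto. contradiction. Qed.

Lemma Phi_norm_le1 z : Phi_car z -> Cnorm z <= 1.
Proof. intros [H| ->]; [unfold unit_circle in H; lra|rewrite Cnorm_C0; lra]. Qed.

Lemma Phi_id_TC : is_hom Phih TC0 (fun x => x).
Proof.
  split; [|split; [|split; [|split]]]; simpl; auto.
  - intros; exact I.
  - intros x y z Px Py H.
    destruct H as [[E1 E2]|[[E1 E2]|[[N [E1 E2]]|[[N [E1 E2]]|[N1 [N2 [N3 [N4 [U C]]]]]]]]]; subst.
    + destruct (classic (y = C0)) as [->|N].
      * right; right; left. split; [symmetry; apply Copp_C0|lra].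
      * right; left. split; auto. rewrite Cnorm_C0. apply Cnorm_pos; auto.
    + destruct (classic (x = C0)) as [->|N].
      * right; right; left. split; [symmetry; apply Copp_C0|lra].
      * left. split; auto. rewrite Cnorm_C0. apply Cnorm_pos; auto.
    + right; right; right. split; auto. split; [intros E; apply (nz_Copp _ N); auto|].
      split; auto. apply cone_refl_l.
    + right; right; left. split; auto.
      assert (U := Phi_unit x Px N). unfold unit_circle in U. rewrite U.
      apply Phi_norm_le1; auto.
    + right; right; right.
      assert (U1 := Phi_unit x Px N1). assert (U2 := Phi_unit y Py N2).
      unfold unit_circle in *. split; [lra|]. split; auto. split; [lra|auto].
Qed.

Lemma ph_Phi z : Phi_car (ph z).
Proof.
  destruct (classic (z = C0)) as [->|N]; [right; apply ph_C0|left; apply Cnorm_ph; auto].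
Qed.

Lemma ph_nz' z : z <> C0 -> ph z <> C0.
Proof. intros N. apply unit_nz. apply Cnorm_ph; auto. Qed.

Lemma Phi_hadd_aba a b : Phi_car a -> Phi_car b -> a <> C0 -> Phi_hadd a b a.
Proof.
  intros Pa Pb Na.
  destruct (classic (b = C0)) as [->|Nb]. { right; left; auto. }
  destruct (classic (b = a)) as [->|E1]. { right; right; left; auto. }
  destruct (classic (b = Copp a)) as [->|E2]. { right; right; right; left; auto. }
  right; right; right; right. repeat (split; auto). apply Phi_unit; auto. apply cone_refl_l.
Qed.

Lemma Phi_hadd_abb a b : Phi_car a -> Phi_car b -> b <> C0 -> Phi_hadd a b b.
Proof.
  intros Pa Pb Nb.
  destruct (classic (a = C0)) as [->|Na]. { left; auto. }
  destruct (classic (b = a)) as [->|E1]. { right; right; left; auto. }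
  destruct (classic (b = Copp a)) as [->|E2]. { right; right; right; left; auto. }
  right; right; right; right. repeat (split; auto). apply Phi_unit; auto. apply cone_refl_r.
Qed.

Lemma ph_Copp x : ph (Copp x) = Copp (ph x).
Proof. rewrite <- !Hf_1. apply Hf_opp. Qed.

Lemma scale_inj c x y : c <> 0 -> Cscale c x = Cscale c y -> x = y.
Proof.
  intros Hc E. destruct x as [a b], y as [a' b']. unfold Cscale in E; simpl in E.
  injection E; intros E2 E1.
  apply Rmult_eq_reg_l in E1; auto. apply Rmult_eq_reg_l in E2; auto. subst; auto.
Qed.

Lemma TC_ph_Phi : is_hom TC0 Phih ph.
Proof.
  split; [|split; [|split; [|split]]]; simpl.
  - intros; apply ph_Phi.
  - apply ph_C0.
  - apply ph_C1.
  - intros; rewrite <- !Hf_1; apply Hf_mul.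
  - intros x y z _ _ H.
    destruct H as [[A E]|[[A E]|[[E A]|[A [N [B C]]]]]].
    + subst z. apply Phi_hadd_aba; try apply ph_Phi. apply ph_nz'.
      intros ->. rewrite Cnorm_C0 in A. pose proof (Cnorm_ge0 y); lra.
    + subst z. apply Phi_hadd_abb; try apply ph_Phi. apply ph_nz'.
      intros ->. rewrite Cnorm_C0 in A. pose proof (Cnorm_ge0 x); lra.
    + subst y. destruct (classic (x = C0)) as [->|N].
      * rewrite Cnorm_C0 in A. assert (Z : Cnorm z = 0) by (pose proof (Cnorm_ge0 z); lra).
        apply Cnorm_eq0 in Z. subst. rewrite Copp_C0, ph_C0. left. split; auto.
      * right; right; right; left. split; [apply ph_nz'; auto|]. split; [apply ph_Copp|apply ph_Phi].
    + assert (Nx : x <> C0).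
      { intros ->. apply N. rewrite Copp_C0. apply Cnorm_eq0. rewrite <- A. apply Cnorm_C0. }
      assert (Ny : y <> C0). { intros ->. rewrite Cnorm_C0 in A. apply Nx, Cnorm_eq0; auto. }
      assert (Nz : z <> C0). { intros ->. rewrite Cnorm_C0 in B. apply Nx, Cnorm_eq0; auto. }
      assert (P := Cnorm_pos x Nx).
      rewrite !ph_nz by auto. rewrite <- A, B.
      set (r := Cnorm x) in *.
      assert (Hr : / r <> 0) by (apply Rinv_neq_0_compat; lra).
      destruct (classic (y = x)) as [->|E1].
      * destruct C as [l [m [Hl [Hm Ez]]]].
        assert (Ez' : z = Cscale (l + m) x).
        { rewrite Ez. destruct x; unfold Cadd, Cscale; simpl; f_equal; ring. }
        assert (Lm : l + m = 1).
        { rewrite Ez' in B. rewrite Cnorm_scale in B by lra. fold r in B.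
          apply (Rmult_eq_reg_r r); lra. }
        rewrite Ez', Lm. replace (Cscale 1 x) with x by (destruct x; unfold Cscale; simpl; f_equal; ring).
        right; right; left. split; [|auto].
        intros E. apply Nx. apply (scale_inj (/ r)); auto. rewrite E. unfold Cscale, C0; simpl; f_equal; ring.
      * right; right; right; right.
        split. { intros E. apply Nx. apply (scale_inj (/ r)); auto. rewrite E. unfold Cscale, C0; simpl; f_equal; ring. }
        split. { intros E. apply Ny. apply (scale_inj (/ r)); auto. rewrite E. unfold Cscale, C0; simpl; f_equal; ring. }
        split. { intros E. apply E1. apply (scale_inj (/ r)); auto. }
        split. { intros E. apply N. apply (scale_inj (/ r)); auto. rewrite E.
                 destruct x; unfold Cscale, Copp; simpl; f_equal; ring. }
        split. { unfold unit_circle. rewrite Cnorm_scale by (left; apply Rinv_0_lt_compat; auto).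
                 rewrite B. fold r. field. lra. }
        destruct C as [l [m [Hl [Hm Ez]]]]. exists l, m. split; auto. split; auto.
        rewrite Ez. destruct x, y; unfold Cadd, Cscale; simpl; f_equal; ring.
Qed.

Lemma TC_hom t : 0 <= t < 1 -> is_hom TC0 TC0 (fun x => Hf x t).
Proof.
  intros Ht. split; [|split; [|split; [|split]]]; simpl.
  - intros; exact I.
  - apply Hf_C0.
  - apply Hf_C1.
  - intros; apply Hf_mul.
  - intros x y z _ _ H.
    destruct H as [[A E]|[[A E]|[[E A]|[A [N [B C]]]]]].
    + left. split; [|subst; auto]. rewrite !Cnorm_Hf. apply Nt_lt; [lra|]. split; [apply Cnorm_ge0|lra].
    + right; left. split; [|subst; auto]. rewrite !Cnorm_Hf. apply Nt_lt; [lra|]. split; [apply Cnorm_ge0|lra].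
    + right; right; left. subst y. split; [apply Hf_opp|]. rewrite !Cnorm_Hf. apply Nt_le; [lra|].
      split; [apply Cnorm_ge0|lra].
    + right; right; right.
      assert (Nx : x <> C0).
      { intros ->. apply N. rewrite Copp_C0. apply Cnorm_eq0. rewrite <- A. apply Cnorm_C0. }
      assert (Ny : y <> C0). { intros ->. rewrite Cnorm_C0 in A. apply Nx, Cnorm_eq0; auto. }
      assert (Nz : z <> C0). { intros ->. rewrite Cnorm_C0 in B. apply Nx, Cnorm_eq0; auto. }
      split; [rewrite !Cnorm_Hf, A; auto|].
      split. { intros E. apply N. apply (Hf_inj _ _ t); [lra|]. rewrite E, Hf_opp; auto. }
      split; [rewrite !Cnorm_Hf, B; auto|].
      rewrite !Hf_nz by auto. rewrite <- A, B.
      destruct C as [l [m [Hl [Hm Ez]]]]. exists l, m. split; auto. split; auto.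
      rewrite Ez. destruct x, y; unfold Cadd, Cscale; simpl; f_equal; ring.
Qed.

Lemma Phi_opens_sub V : Phi_opens V -> forall z, V z -> Phi_car z.
Proof.
  intros [H|[H _]] z Vz.
  - apply H; auto.
  - left; apply H; auto.
Qed.

Lemma Phi_fix z : Phi_car z -> ph z = z.
Proof.
  intros [U| ->]; [|apply ph_C0].
  rewrite ph_nz by (apply unit_nz; auto). unfold unit_circle in U. rewrite U, Rinv_1.
  destruct z; unfold Cscale; simpl; f_equal; ring.
Qed.

Lemma Phi_cont_id : continuous_map Phih TC0 (fun x => x).
Proof.
  split; simpl. { intros; exact I. }
  intros V [HV|[[_ Vop] V0]].
  - left. intros z; split; [tauto|]. intros Pz; split; auto. apply HV; exact I.
  - right. split.
    + intros z [Pz Vz]. apply Phi_unit; auto. intros ->; auto.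
    + intros x [Px Vx]. destruct (Vop x Vx) as [eps [He Hc]]. exists eps; split; auto.
      intros y Uy Hy. split; [left; auto|]. apply Hc; auto. exact I.
Qed.

Lemma Phi_cont_ph : continuous_map TC0 Phih ph.
Proof.
  split; simpl. { intros; apply ph_Phi. }
  intros V [HV|[Vsub Vop]].
  - left. intros z; split; [tauto|]. intros _. split; [exact I|]. apply HV, ph_Phi.
  - assert (V0 : ~ V C0). { intros V0. apply Vsub in V0. apply (unit_nz C0); auto. }
    right. split.
    + split. { intros; exact I. }
      intros x [_ Vx].
      assert (Nx : x <> C0). { intros ->. rewrite ph_C0 in Vx. auto. }
      destruct (Vop _ Vx) as [eps [He Hc]].
      destruct (Hf_cont x 1 Nx eps He) as [d [Hd Hd2]].
      exists d. split; auto. intros y _ Hy. split; [exact I|].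
      assert (Z1 := abs_fst_le (Csub y x)). assert (Z2 := abs_snd_le (Csub y x)).
      assert (E1 : fst (Csub y x) = fst y - fst x) by (simpl; ring).
      assert (E2 : snd (Csub y x) = snd y - snd x) by (simpl; ring).
      rewrite E1 in Z1; rewrite E2 in Z2.
      destruct (Hd2 y 1 ltac:(lra) ltac:(lra)) as [Ny Hn].
      { rewrite Rminus_diag, Rabs_R0; auto. }
      rewrite !Hf_1 in Hn. apply Hc; auto. apply Cnorm_ph; auto.
    + intros [_ Vx]. rewrite ph_C0 in Vx. auto.
Qed.

Theorem part3 : homotopy_equivalence_via Phih TC0 (fun x => x) ph.
Proof.
  apply assemble.
  - apply Phi_id_TC.
  - apply Phi_cont_id.
  - apply TC_ph_Phi.
  - apply Phi_cont_ph.
  - apply Phi_opens_sub.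
  - apply Phi_fix.
  - apply Hf_cont_zc. intros; exact I.
  - apply TC_hom.
Qed.

Theorem corollary2p2 :
  homotopy_equivalence_via Kh Tri0 (fun x => x) ph /\
  homotopy_equivalence_via Sh TR0 (fun x => x) ph /\
  homotopy_equivalence_via Phih TC0 (fun x => x) ph /\
  homotopy_equivalence_via Kh TTri0 (fun x => x) ph.
Proof.
  split; [apply part1|]. split; [apply part2|]. split; [apply part3|apply part4].
Qed.
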